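(* Let $G$ be an interval graph and let $[C_1,\ldots,C_t]$ be a consecutive clique arrangement of $G$. For a vertex $v$ let $r(v)=\max\{i : v\in C_i\}$, and order the vertices of $C_1$ by nondecreasing $r(v)$ (ties broken arbitrarily). Then there exists a triangle packing of $G$ of maximum cardinality in which every vertex of $C_1$ is covered by some triangle, except possibly the first vertex, or the first two vertices, of $C_1$ in this ordering; that is, the set of uncovered vertices of $C_1$ is an initial segment of the ordering of length at most $2$.
   Context: A graph is an interval graph if it is the intersection graph of a finite collection of intervals on the real line. A consecutive clique arrangement of a graph $G$ is a linear ordering $[C_1,\ldots,C_t]$ of all maximal cliques of $G$ such that for each vertex $v$, the cliques containing $v$ are consecutive in the ordering. A triangle packing is a collection of pairwise vertex-disjoint triangles; a vertex is covered if it lies in one of these triangles. *)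

(* Defs.v *)
From HB Require Import structures.
From mathcomp Require Import all_boot all_order all_algebra.
Set Implicit Arguments. Unset Strict Implicit. Unset Printing Implicit Defensive.
Import Order.TTheory GRing.Theory Num.Theory.

Definition simple_graph (T : finType) (e : rel T) : Prop :=
  symmetric e /\ irreflexive e.

(* Interval graph: intersection graph of closed intervals [lo v, hi v] of the
   rationals (for a finite collection this is no loss of generality). *)
Definition interval_graph (T : finType) (e : rel T) : Prop :=
  exists lo hi : T -> rat,
    (forall v, lo v <= hi v)%R /\
    forall x y, x != y ->
      (e x y <-> (Num.max (lo x) (lo y) <= Num.min (hi x) (hi y))%R).

Definition is_clique (T : finType) (e : rel T) (C : {set T}) : bool :=
  [forall x in C, forall y in C, (x != y) ==> e x y].

Definition is_max_clique (T : finType) (e : rel T) (C : {set T}) : bool :=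
  [&& C != set0, is_clique e C &
      [forall D : {set T}, (is_clique e D && (C \subset D)) ==> (D == C)]].

(* Consecutive clique arrangement [C_1,...,C_t] stored as the list A
   (0-based indices). *)
Definition consecutive_clique_arrangement (T : finType) (e : rel T)
    (A : seq {set T}) : Prop :=
  [/\ uniq A,
      (forall C, C \in A -> is_max_clique e C),
      (forall C, is_max_clique e C -> C \in A) &
      (forall v i j k, i <= j <= k -> k < size A ->
         v \in nth set0 A i -> v \in nth set0 A k -> v \in nth set0 A j)].

Definition rmax (T : finType) (A : seq {set T}) (v : T) : nat :=
  \max_(i < size A | v \in nth set0 A i) (i : nat).

Definition is_triangle (T : finType) (e : rel T) (S : {set T}) : bool :=
  (#|S| == 3) && is_clique e S.

Definition triangle_packing (T : finType) (e : rel T) (P : {set {set T}}) : bool :=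
  [forall S in P, is_triangle e S] && trivIset P.

Definition max_triangle_packing (T : finType) (e : rel T) (P : {set {set T}}) : Prop :=
  triangle_packing e P /\
  forall Q : {set {set T}}, triangle_packing e Q -> #|Q| <= #|P|.

(* Main.v *)
Require Import Defs.
From HB Require Import structures.
From mathcomp Require Import all_boot all_order all_algebra.
Set Implicit Arguments. Unset Strict Implicit. Unset Printing Implicit Defensive.

Lemma disjP (T:finType) (A B : {set T}) :
  (forall x, x \in A -> x \in B -> False) -> [disjoint A & B].
Proof.
move=> H; rewrite -setI_eq0; apply/eqP/setP => x; rewrite !inE.
apply/negbTE/negP => /andP[]; exact: H.
Qed.

Lemma is_cliqueP (T : finType) (e : rel T) (C : {set T}) :
  reflect (forall x y, x \in C -> y \in C -> x != y -> e x y) (is_clique e C).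
Proof.
apply: (iffP forall_inP) => H.
  by move=> x y xC yC nxy; exact: (implyP (forall_inP (H x xC) y yC)) nxy.
by move=> x xC; apply/forall_inP => y yC; apply/implyP; exact: H.
Qed.

Lemma edge_arr (T : finType) (e : rel T) (A : seq {set T}) x y :
  simple_graph e -> consecutive_clique_arrangement e A -> e x y ->
  exists i, [/\ i < size A, x \in nth set0 A i & y \in nth set0 A i].
Proof.
move=> [esym eirr] [_ _ Hall _] exy.
have nxy : x != y by apply: contraTneq exy => ->; rewrite eirr.
pose D0 := [set x; y].
have cD0 : is_clique e D0 && (D0 \subset D0).
  rewrite subxx andbT; apply/is_cliqueP => a b.
  rewrite !inE => /orP[]/eqP-> /orP[]/eqP->; rewrite ?eqxx //.
  by rewrite esym.
case: (@arg_maxnP _ D0 (fun D : {set T} => is_clique e D && (D0 \subset D)) (fun D : {set T} => #|D|) cD0) => C /andP[cC sC] maxC.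
have mC : is_max_clique e C.
  apply/and3P; split => //.
    by apply/set0Pn; exists x; apply: (subsetP sC); rewrite !inE eqxx.
  apply/forallP => D; apply/implyP => /andP[cD sCD].
  rewrite eq_sym eqEcard sCD /=; apply: maxC; rewrite cD /=.
  exact: subset_trans sCD.
have CA := Hall _ mC.
exists (index C A); rewrite index_mem nth_index //; split => //;
 by apply: (subsetP sC); rewrite !inE eqxx ?orbT.
Qed.

Lemma rmax_ge (T : finType) (A : seq {set T}) v i :
  i < size A -> v \in nth set0 A i -> i <= rmax A v.
Proof.
move=> Hi Hv; rewrite /rmax.
exact: (@leq_bigmax_cond _ (fun j : 'I_(size A) => v \in nth set0 A j) (fun j => j : nat) (Ordinal Hi)).
Qed.

Lemma rmax_spec (T : finType) (A : seq {set T}) v :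
  0 < size A -> v \in nth set0 A 0 ->
  rmax A v < size A /\ v \in nth set0 A (rmax A v).
Proof.
move=> H0 Hv.
have := @eq_bigmax_cond _ [pred j : 'I_(size A) | v \in nth set0 A j] (fun j => j : nat).
case => [|i0 Hi0 E].
  by apply/card_gt0P; exists (Ordinal H0).
rewrite /rmax E; split => //; exact: ltn_ord.
Qed.

Lemma cliqueW (T : finType) (e : rel T) (C : {set T}) :
  is_clique e C -> forall x y, x \in C -> y \in C -> x != y -> e x y.
Proof. by move/is_cliqueP. Qed.

Lemma transfer (T : finType) (e : rel T) (A : seq {set T}) u v a :
  simple_graph e -> consecutive_clique_arrangement e A -> 0 < size A ->
  v \in nth set0 A 0 -> u \in nth set0 A 0 -> rmax A v <= rmax A u ->
  a != u -> e v a -> e u a.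
Proof.
move=> sg cca H0 vC uC rvu au eva.
have [i [Hi vi ai]] := edge_arr sg cca eva.
have [Hr ur] := rmax_spec H0 uC.
case: cca => _ Hmax _ Hcons.
have ui : u \in nth set0 A i.
  apply: (Hcons u 0 i (rmax A u)) => //.
  by rewrite /= (leq_trans (rmax_ge Hi vi) rvu).
have /Hmax /and3P[_ cl _] := mem_nth set0 Hi.
by apply: (cliqueW cl) => //; rewrite eq_sym.
Qed.

Lemma sorted_rmax (T : finType) (A : seq {set T}) (s : seq T) u v :
  sorted (fun x y => rmax A x <= rmax A y) s -> u \in s -> v \in s ->
  index v s < index u s -> rmax A v <= rmax A u.
Proof.
move=> ss us vs lt.
have := @sorted_leq_nth _ (fun x y => rmax A x <= rmax A y)
  (fun y x z => @leq_trans _ _ _) (fun x => leqnn _) v s ss (index v s) (index u s).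
rewrite !inE !index_mem !nth_index //; apply => //; exact: ltnW.
Qed.

Definition Uc (T:finType) (A : seq {set T}) (P : {set {set T}}) :=
  [set w in nth set0 A 0 | w \notin cover P].
Definition Phi (T:finType) (A : seq {set T}) (s : seq T) (P : {set {set T}}) :=
  \sum_(w in Uc A P) index w s.

Lemma coverE (T : finType) (P : {set {set T}}) x :
  reflect (exists2 B, B \in P & x \in B) (x \in cover P).
Proof. rewrite /cover; exact: bigcupP. Qed.

Lemma swap_step (T : finType) (e : rel T) (A : seq {set T}) (P : {set {set T}}) u v S :
  simple_graph e -> consecutive_clique_arrangement e A -> 0 < size A ->
  triangle_packing e P -> u \in Uc A P -> v \in nth set0 A 0 -> S \in P -> v \in S ->
  rmax A v <= rmax A u ->
  [/\ triangle_packing e ((u |: (S :\ v)) |: (P :\ S)),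
      #|(u |: (S :\ v)) |: (P :\ S)| = #|P| &
      Uc A ((u |: (S :\ v)) |: (P :\ S)) = v |: (Uc A P :\ u)].
Proof.
move=> sg cca H0 /andP[/forall_inP tri triv] uU vC SP vS rvu.
have tv := elimT trivIsetP triv.
move: uU; rewrite inE => /andP[uC ucov].
have uS : u \notin S by apply: contra ucov => uS; apply/coverE; exists S.
have uv : u != v by apply: contraNneq uS => ->.
have /andP[/eqP cS clS] := tri S SP.
set S' := u |: (S :\ v).
have cardS' : #|S'| = 3.
  rewrite cardsU1 in_setD1 (negbTE uS) andbF /=.
  by rewrite (cardsD1 v S) vS in cS; rewrite -cS.
have clS' : is_clique e S'.
  apply/is_cliqueP => x y; rewrite !inE.
  have tr : forall z, z != v -> z \in S -> e u z.
    move=> z zv zS; apply: (transfer sg cca H0 vC uC rvu).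
      by apply: contraNneq uS => <-.
    by apply: (cliqueW clS) => //; rewrite eq_sym.
  case: sg => esym _.
  move=> /orP[/eqP->|/andP[xv xS]] /orP[/eqP->|/andP[yv yS]].
  - by rewrite eqxx.
  - by move=> _; exact: tr.
  - by move=> _; rewrite esym; exact: tr.
  - exact: (cliqueW clS).
have ntri : forall B, B \in P -> B != set0.
  by move=> B /tri /andP[/eqP cB _]; apply/eqP => B0; move: cB; rewrite B0 cards0.
have disj : {in P :\ S, forall B : {set T}, [disjoint S' & B]}.
  move=> B; rewrite in_setD1 => /andP[BS BP]; apply: disjP => x.
  rewrite !inE => /orP[/eqP->|/andP[xv xS]] xB.
    by move/negP: ucov; apply; apply/coverE; exists B.
  have := tv B S BP SP BS.
  by move/disjointFl => /(_ x xS); rewrite xB.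
have n0 : set0 \notin P :\ S.
  by apply/negP; rewrite in_setD1 => /andP[_ /ntri]; rewrite eqxx.
have [triv' S'n] := trivIsetU1 disj (trivIsetD [set S] triv) n0.
split.
- apply/andP; split => //; apply/forall_inP => B; rewrite !inE.
  by move=> /orP[/eqP->|/andP[_ /tri]] //; rewrite /is_triangle cardS' eqxx.
- by rewrite cardsU1 S'n (cardsD1 S P) SP.
- have covE : forall w, (w \in cover (S' |: (P :\ S))) = (w == u) || ((w != v) && (w \in cover P)).
    move=> w; apply/coverE/idP.
      move=> [B]; rewrite !inE => /orP[/eqP->|/andP[BS BP]].
        rewrite !inE => /orP[->//|/andP[wv wS]]; rewrite wv /=.
        by apply/orP; right; apply/coverE; exists S.
      move=> wB; have wv : w != v.
        apply/eqP => wv; have := tv B S BP SP BS.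
        by move/disjointFl => /(_ v vS); rewrite -wv wB.
      by rewrite wv /=; apply/orP; right; apply/coverE; exists B.
    move=> /orP[/eqP->|/andP[wv /coverE[B BP wB]]].
      by exists S'; rewrite !inE eqxx.
    case: (eqVneq B S) => [BS|BS].
      by exists S'; rewrite !inE ?eqxx // -BS wB wv orbT.
    by exists B => //; rewrite !inE BS BP orbT.
  apply/setP => w; rewrite !inE covE.
  case: (eqVneq w v) => [->|wv]; first by rewrite vC eq_sym (negbTE uv) /=.
  by case: (eqVneq w u) => [->|wu] //=; rewrite andbF.
Qed.

Definition mp (T : finType) (e : rel T) (P : {set {set T}}) : bool :=
  triangle_packing e P && [forall Q : {set {set T}}, triangle_packing e Q ==> (#|Q| <= #|P|)].

Theorem mainTheorem3 (T : finType) (e : rel T) (A : seq {set T}) (s : seq T) :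
  simple_graph e ->
  interval_graph e ->
  consecutive_clique_arrangement e A ->
  0 < size A ->
  (* s: the vertices of C_1 ordered by nondecreasing r, ties arbitrary *)
  uniq s ->
  [set x in s] = nth set0 A 0 ->
  sorted (fun x y => rmax A x <= rmax A y) s ->
  exists P : {set {set T}},
    max_triangle_packing e P /\
    exists k, k <= 2 /\
      [set v in nth set0 A 0 | v \notin cover P] = [set x in take k s].
Proof.
move=> sg _ cca H0 us Hs ss.
have inC : forall x, (x \in nth set0 A 0) = (x \in s) by move=> x; rewrite -Hs inE.
have tp0 : triangle_packing e set0.
  apply/andP; split; first by apply/forall_inP => S; rewrite inE.
  by apply/trivIsetP => B1 B2; rewrite inE.
case: (@arg_maxnP _ set0 (triangle_packing e) (fun P => #|P|) tp0) => P0 tpP0 maxP0.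
have mpP0 : mp e P0.
  by rewrite /mp tpP0 /=; apply/forallP => Q; apply/implyP; exact: maxP0.
case: (@arg_minnP _ P0 (mp e) (Phi A s) mpP0) => P /andP[tpP /forallP maxP] minP.
have maxP' : forall Q, triangle_packing e Q -> #|Q| <= #|P|.
  by move=> Q tQ; exact: (implyP (maxP Q) tQ).
exists P; split; first by split.
have C1max : is_max_clique e (nth set0 A 0).
  by case: cca => _ Hm _ _; apply: Hm; exact: mem_nth.
have /and3P[_ clC1 _] := C1max.
have small : #|Uc A P| <= 2.
  rewrite leqNgt; apply/negP => /card_gt2P [x [y [z [[xU yU zU] [xy yz zx]]]]].
  move: (xU) (yU) (zU); rewrite !inE => /andP[xC xc] /andP[yC yc] /andP[zC zc].
  set X := x |: (y |: [set z]).
  have cX : #|X| = 3.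
    rewrite /X !cardsU1 cards1 !inE negb_or xy /= eq_sym zx /=.
    by rewrite (negbTE (yz)).
  have clX : is_clique e X.
    apply/is_cliqueP => a b; rewrite !inE => Ha Hb ab.
    apply: (cliqueW clC1) => //.
      by case/orP: Ha => [|/orP[]] /eqP->.
    by case/orP: Hb => [|/orP[]] /eqP->.
  move/andP: tpP => [/forall_inP tri triv].
  have ntri : set0 \notin P.
    by apply/negP => /tri /andP[/eqP]; rewrite cards0.
  have disj : {in P, forall B : {set T}, [disjoint X & B]}.
    move=> B BP; apply: disjP => w; rewrite !inE => Hw wB.
    have wc : w \in cover P by apply/coverE; exists B.
    by case/orP: Hw => [|/orP[]] /eqP wE; move: wc; rewrite wE ?(negbTE xc) ?(negbTE yc) ?(negbTE zc).
  have [triv' Xn] := trivIsetU1 disj triv ntri.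
  have tpX : triangle_packing e (X |: P).
    apply/andP; split => //; apply/forall_inP => B; rewrite !inE.
    by case/orP => [/eqP->|/tri //]; rewrite /is_triangle cX eqxx.
  by have := maxP' _ tpX; rewrite cardsU1 Xn add1n ltnn.
have down : forall u v, u \in Uc A P -> v \in s -> index v s < index u s -> v \in Uc A P.
  move=> u v uU vs lt; apply/negPn/negP => vU.
  have uC : u \in nth set0 A 0 by move: uU; rewrite inE => /andP[].
  have vC : v \in nth set0 A 0 by rewrite inC.
  have vcov : v \in cover P by move: vU; rewrite inE vC /= negbK.
  have [S SP vS] := coverE _ _ vcov.
  have rvu : rmax A v <= rmax A u by apply: (sorted_rmax ss) => //; rewrite -inC.
  have [tp' card' Ueq] := swap_step sg cca H0 tpP uU vC SP vS rvu.
  have mp' : mp e ((u |: (S :\ v)) |: (P :\ S)).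
    rewrite /mp tp' card' /=; apply/forallP => Q; apply/implyP; exact: maxP'.
  have := minP _ mp'; rewrite /Phi Ueq big_setU1 /=; last by rewrite in_setD1 negb_and vU orbT.
  rewrite (big_setD1 u uU) /= leq_add2r leqNgt; by rewrite lt.
exists #|Uc A P|; split => //.
have cardtake : forall m, m <= size s -> #|[set x in take m s]| = m.
  move=> m ms; rewrite cardsE; move/card_uniqP: (take_uniq m us) => ->.
  exact: size_takel.
have Us : forall w, w \in Uc A P -> w \in s by move=> w; rewrite inE inC => /andP[].
have idxinj : forall x w, x \in s -> w \in s -> index x s = index w s -> x = w.
  by move=> x w xs ws E; rewrite -(nth_index x xs) E nth_index.
have -> : [set v in nth set0 A 0 | v \notin cover P] = Uc A P by [].
apply/setP => w; rewrite [in RHS]inE.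
case: (boolP (w \in s)) => ws; last first.
  by apply/idP/idP => H; move: ws; rewrite ?(Us w H) ?(mem_take H).
rewrite in_take //.
case: (boolP (w \in Uc A P)) => wU.
  apply/esym; rewrite -(cardtake (index w s).+1); last by rewrite index_mem.
  apply: subset_leq_card; apply/subsetP => x; rewrite inE => xt.
  have xs : x \in s by exact: mem_take xt.
  move: xt; rewrite in_take // ltnS leq_eqVlt => /orP[/eqP E|lt].
    by rewrite (idxinj x w xs ws E).
  exact: (down w x wU xs lt).
apply/esym/negbTE; rewrite -leqNgt.
rewrite -[X in _ <= X](cardtake (index w s)); last by apply: ltnW; rewrite index_mem.
apply: subset_leq_card; apply/subsetP => x xU; rewrite inE.
have xs := Us x xU.
rewrite in_take // ltnNge; apply/negP; rewrite leq_eqVlt => /orP[/eqP E|lt].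
  by move: wU; rewrite (idxinj w x ws xs E) xU.
by move: wU; rewrite (down x w xU ws lt).
Qed.
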